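(* Let $n,d\in\mathbb{Z}_+$, let $Q=(Q_{jk})_{j,k=0}^{n-1}$ be a real symmetric matrix, let $c\in\mathbb{R}$, and let $f:\mathbb{F}_2^n\to[-2^{d-1},2^{d-1})\cap\mathbb{Z}$ be given by $f(x)=c+\sum_{j,k=0}^{n-1}Q_{jk}x_jx_k$ (so $c=f(0)$). Set $q_j=\sum_{k}Q_{jk}$ and $q_\emptyset=f(0)+\tfrac14\mathrm{tr}(Q)+\tfrac14\mathrm{sum}(Q)$, where $\mathrm{sum}(Q)=\sum_{j,k}Q_{jk}$. Define the following unitaries on $n+d$ qubits (an $n$-qubit register holding $x=(x_0,\dots,x_{n-1})$ and a $d$-qubit register holding $y$): - $\tilde U_\emptyset=\mathbb{1}\otimes\mathcal{P}_d(q_\emptyset)$; - for $0\le j\le n-1$, $\tilde U_j$ = (controlled on qubit $x_j$, apply $X^{\otimes d}$ to the $y$-register), then $\mathcal{P}_d(-\tfrac{q_j}{2})$ on the $y$-register, then again (controlled on $x_j$, apply $X^{\otimes d}$ to the $y$-register); - for $0\le j<k\le n-1$, $\tilde U_{jk}$ = CNOT with control $x_j$ and target $x_k$, then (controlled on qubit $x_k$, apply $X^{\otimes d}$ to the $y$-register), then $\mathcal{P}_d(\tfrac{Q_{jk}}{2})$ on the $y$-register, then (controlled on $x_k$, apply $X^{\otimes d}$ to the $y$-register), then CNOT with control $x_j$ and target $x_k$. Let $\tilde U_{f,d}=\tilde U_\emptyset\circ\prod_{j=0}^{n-1}\tilde U_j\circ\prod_{j=0}^{n-2}\prod_{k=j+1}^{n-1}\tilde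 U_{jk}$. Then for every $x\in\mathbb{F}_2^n$ and every $y\in\mathbb{F}_2^d$ (identified with an integer mod $2^d$), $$\tilde U_{f,d}\ket{x}\ket{y}_d=\exp\!\Big(\tfrac{2\pi i}{2^d}f(x)\,y+i\alpha_{f,x}\Big)\ket{x}\ket{y}_d,\qquad \alpha_{f,x}=\tfrac{\pi(1-2^d)}{2^d}\big(f(x)-f(0)\big).$$ Consequently $U_{f,d}=(\mathbb{1}\otimes\mathrm{QFT}_d^\dagger)\circ\tilde U_{f,d}\circ(\mathbb{1}\otimes\mathrm{QFT}_d)$ satisfies $U_{f,d}\ket{x}\ket{y}_d=e^{i\alpha_{f,x}}\ket{x}\ket{y+f(x)}_d$ for all $x,y$, i.e. it is a projective quantum dictionary encoder for $f$ with garbage phases $\alpha_{f,x}$.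
   Context: Computational basis notation: for $x=(x_0,\dots,x_{n-1})\in\mathbb{F}_2^n$, $\ket{x}=\ket{x_0}\cdots\ket{x_{n-1}}$. For $\bar y\in\mathbb{Z}$ and $d\in\mathbb{Z}_+$, $\ket{\bar y}_d=\ket{y_0}\cdots\ket{y_{d-1}}$ where $(y_0,\dots,y_{d-1})\in\mathbb{F}_2^d$ satisfies $\bar y\equiv\sum_{j=0}^{d-1}y_j2^{d-1-j}\pmod{2^d}$; arithmetic inside $\ket{\cdot}_d$ is mod $2^d$. Note $X^{\otimes d}\ket{y}_d=\ket{-y-1}_d$. For $k\in\mathbb{R}$, $\mathcal{P}_d(k)=\bigotimes_{j=0}^{d-1}\mathrm{diag}(1,e^{\pi i k/2^j})$, equivalently $\mathcal{P}_d(k)\ket{y}_d=e^{2\pi i ky/2^d}\ket{y}_d$. $\mathrm{QFT}_d$ is the $d$-qubit quantum Fourier transform, $\mathrm{QFT}_d\ket{y}_d=2^{-d/2}\sum_{z=0}^{2^d-1}e^{2\pi i yz/2^d}\ket{z}_d$. A unitary $U_{f,d}$ on $n+d$ qubits is a projective quantum dictionary encoder for $f:\mathbb{F}_2^n\to\mathbb{Z}$ if $U_{f,d}\ket{x}\ket{y}_d=e^{i\alpha}\ket{x}\ket{y+f(x)}_d$ for all $x,y$, for some real phases $\alpha$ (the garbage phases). *)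

(* Defs.v *)
From HB Require Import structures.
From mathcomp Require Import all_boot all_order all_algebra.
From mathcomp Require Import complex.
From mathcomp Require Import reals trigo.

Set Implicit Arguments.
Unset Strict Implicit.
Unset Printing Implicit Defensive.

Import Order.TTheory GRing.Theory Num.Theory.
Local Open Scope ring_scope.
Local Open Scope complex_scope.

Section Quantum.
Variable R : realType.

Definition expi (t : R) : R[i] := Complex (cos t) (sin t).

Definition bits (k : nat) := {ffun 'I_k -> bool}.

Definition bits0 (k : nat) : bits k := [ffun => false].

Definition yval (d : nat) (y : bits d) : nat :=
  (\sum_(j < d) (y j : nat) * 2 ^ (d.-1 - j))%N.

(* |ybar>_d for ybar : int : the bit string of ybar mod 2^d (big endian) *)
Definition bits_of_int (d : nat) (z : int) : bits d :=
  [ffun j : 'I_d => odd (`|(z %% (2 ^ d)%:Z)%Z|%N %/ 2 ^ (d.-1 - j))].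

Definition basis (n d : nat) := (bits n * bits d)%type.

Definition state (n d : nat) := basis n d -> R[i].
Definition op (n d : nat) := state n d -> state n d.

Variables n d : nat.

Definition ket (x : bits n) (y : bits d) : state n d :=
  fun b => if b == (x, y) then 1 else 0.

Definition sscale (a : R[i]) (psi : state n d) : state n d := fun b => a * psi b.

(* linear operator with matrix (kernel) K : <b'|U|b> = K b' b *)
Definition op_of_kernel (K : basis n d -> basis n d -> R[i]) : op n d :=
  fun psi b' => \sum_(b : basis n d) K b' b * psi b.

Definition adjoint_kernel (K : basis n d -> basis n d -> R[i]) :=
  fun b' b => conjc (K b b').

Definition perm_op (sigma : basis n d -> basis n d) : op n d :=
  fun psi b' => \sum_(b : basis n d | sigma b == b') psi b.

Definition Pd (k : R) : op n d :=
  fun psi b => (\prod_(j < d) (if b.2 j then expi (pi * k / 2 ^+ j) else 1))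
               * psi b.

Definition cX (j : 'I_n) : op n d :=
  perm_op (fun b => (b.1, if b.1 j then [ffun i => ~~ b.2 i] else b.2)).

Definition CNOT (j k : 'I_n) : op n d :=
  perm_op (fun b => ([ffun i => if i == k then b.1 k (+) b.1 j else b.1 i], b.2)).

Definition QFT_kernel : basis n d -> basis n d -> R[i] :=
  fun b' b => if b'.1 == b.1 then
      ((Num.sqrt (2 ^+ d : R))^-1)%:C *
      expi (2 * pi * (yval b.2)%:R * (yval b'.2)%:R / 2 ^+ d)
    else 0.

Definition QFT : op n d := op_of_kernel QFT_kernel.
Definition QFTdag : op n d := op_of_kernel (adjoint_kernel QFT_kernel).

Definition compose_list (T : Type) (U : T -> op n d) (s : seq T) : op n d :=
  foldr (fun t acc => U t \o acc) id s.

Variables (Q : 'M[R]_n) (f : bits n -> int).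

Definition qj (j : 'I_n) : R := \sum_(k < n) Q j k.
Definition qempty : R :=
  (f (bits0 n))%:~R + \tr Q / 4 + (\sum_(j < n) \sum_(k < n) Q j k) / 4.

Definition Uempty : op n d := Pd qempty.
Definition Uj (j : 'I_n) : op n d := cX j \o Pd (- qj j / 2) \o cX j.
Definition Ujk (j k : 'I_n) : op n d :=
  CNOT j k \o cX k \o Pd (Q j k / 2) \o cX k \o CNOT j k.

Definition pairs_lt : seq ('I_n * 'I_n) :=
  [seq (j, k) | j : 'I_n <- enum 'I_n, k : 'I_n <- [seq k <- enum 'I_n | (nat_of_ord j < nat_of_ord k)%N]].

Definition Utilde : op n d :=
  Uempty \o compose_list Uj (enum 'I_n)
         \o compose_list (fun p => Ujk p.1 p.2) pairs_lt.

Definition Uencoder : op n d := QFTdag \o Utilde \o QFT.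

Definition alpha (x : bits n) : R :=
  pi * (1 - 2 ^+ d) / 2 ^+ d * ((f x)%:~R - (f (bits0 n))%:~R).

End Quantum.

Definition is_PQDE (R : realType) (n d : nat) (f : bits n -> int)
    (U : op R n d) : Prop :=
  exists alpha : bits n -> bits d -> R, forall (x : bits n) (y : bits d),
    U (ket R x y) =
      sscale (expi (alpha x y)) (ket R x (bits_of_int d ((yval y)%:Z + f x))).

(* Main.v *)
Require Import Defs.
From HB Require Import structures.
From mathcomp Require Import all_boot all_order all_algebra.
From mathcomp Require Import complex.
From mathcomp Require Import reals trigo.
From mathcomp Require Import ring lra zify.
From Stdlib Require Import FunctionalExtensionality.
Set Implicit Arguments.
Unset Strict Implicit.
Unset Printing Implicit Defensive.
Import Order.TTheory GRing.Theory Num.Theory.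
Local Open Scope ring_scope.
Local Open Scope complex_scope.

Lemma expiD (R : realType) (a b : R) : expi (a + b) = expi a * expi b.
Proof. rewrite /expi cosD sinD /=. congr Complex; ring. Qed.
Lemma expi0 (R : realType) : expi (0:R) = 1.
Proof. by rewrite /expi cos0 sin0. Qed.
Lemma conj_expi (R : realType) (a : R) : conjc (expi a) = expi (- a).
Proof. by rewrite /expi cosN sinN. Qed.

Lemma expi_sum (R : realType) (T : Type) (s : seq T) (g : T -> R) :
  \prod_(t <- s) expi (g t) = expi (\sum_(t <- s) g t).
Proof.
elim: s => [|t s IH]; first by rewrite !big_nil expi0.
by rewrite !big_cons IH expiD.
Qed.

Definition diagop (R : realType) (n d : nat) (t : basis n d -> R[i]) : op R n d :=
  fun psi b => t b * psi b.

Lemma perm_op_inv (R : realType) (n d : nat) (s : basis n d -> basis n d)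
  (hs : involutive s) (psi : state R n d) : perm_op s psi = psi \o s.
Proof.
apply: functional_extensionality => b'.
rewrite /perm_op (big_pred1 (s b')) //= => b /=.
apply/eqP/eqP => [<-|->]; by rewrite hs.
Qed.

Lemma conj_diag (R : realType) (n d : nat) (s : basis n d -> basis n d)
  (hs : involutive s) (t : basis n d -> R[i]) :
  perm_op s \o diagop t \o perm_op s = diagop (t \o s).
Proof.
apply: functional_extensionality => psi.
apply: functional_extensionality => b.
by rewrite /= !perm_op_inv // /diagop /= hs.
Qed.

Lemma compose_diag (R : realType) (n d : nat) (T : eqType) (U : T -> op R n d)
  (g : T -> basis n d -> R[i]) (s : seq T) (hU : forall t, t \in s -> U t = diagop (g t)) :
  compose_list U s = diagop (fun b => \prod_(t <- s) g t b).
Proof.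
elim: s hU => [|t s IH] hU /=.
  apply: functional_extensionality => psi.
  apply: functional_extensionality => b.
  by rewrite /diagop big_nil mul1r.
rewrite IH; last by move=> u hu; apply: hU; rewrite inE hu orbT.
rewrite hU ?inE ?eqxx //.
apply: functional_extensionality => psi.
apply: functional_extensionality => b.
by rewrite /diagop /= big_cons mulrA.
Qed.

Lemma diag_comp (R : realType) (n d : nat) (t1 t2 : basis n d -> R[i]) :
  diagop t1 \o diagop t2 = diagop (fun b => t1 b * t2 b).
Proof.
apply: functional_extensionality => psi.
apply: functional_extensionality => b.
by rewrite /diagop /= mulrA.
Qed.

Definition sigX (n d : nat) (j : 'I_n) (b : basis n d) : basis n d :=
  (b.1, if b.1 j then [ffun i => ~~ b.2 i] else b.2).
Definition tauC (n d : nat) (j k : 'I_n) (b : basis n d) : basis n d :=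
  ([ffun i => if i == k then b.1 k (+) b.1 j else b.1 i], b.2).

Lemma sigX_inv n d j : involutive (@sigX n d j).
Proof.
move=> [x y]; rewrite /sigX /=; case: (x j) => //.
by congr pair; apply/ffunP => i; rewrite !ffunE negbK.
Qed.

Lemma tauC_inv n d (j k : 'I_n) : j != k -> involutive (@tauC n d j k).
Proof.
move=> hjk [x y]; rewrite /tauC /=; congr pair; apply/ffunP => i.
rewrite !ffunE; case: eqP => [->|_]; last by [].
rewrite eqxx (negbTE hjk).
by rewrite -addbA addbb addbF.
Qed.

Definition pph (R : realType) (d : nat) (k : R) (y : bits d) : R[i] :=
  \prod_(j < d) (if y j then expi (pi * k / 2 ^+ j) else 1).

Lemma Pd_diag (R : realType) (n d : nat) (k : R) :
  Pd k = diagop (fun b : basis n d => pph k b.2).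
Proof. by []. Qed.

Lemma Uj_diag (R : realType) (n d : nat) (Q : 'M[R]_n) (j : 'I_n) :
  @Uj R n d Q j = diagop (fun b => pph (- qj Q j / 2) (sigX j b).2).
Proof. rewrite /Uj Pd_diag. exact: (conj_diag (@sigX_inv n d j)). Qed.

Lemma Ujk_diag (R : realType) (n d : nat) (Q : 'M[R]_n) (j k : 'I_n) :
  j != k ->
  @Ujk R n d Q j k = diagop (fun b => pph (Q j k / 2) (sigX k (tauC j k b)).2).
Proof.
move=> hjk.
have -> : @Ujk R n d Q j k = CNOT j k \o (cX k \o Pd (Q j k / 2) \o cX k) \o CNOT j k by [].
rewrite Pd_diag (conj_diag (@sigX_inv n d k)).
have H := (conj_diag (@tauC_inv n d j k hjk) (fun b => pph (Q j k / 2) (sigX k b).2)).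
rewrite /CNOT -/(tauC j k). exact H.
Qed.

Lemma pphE (R : realType) (d : nat) (k : R) (y : bits d) :
  pph k y = expi (2 * pi * k * (yval y)%:R / 2 ^+ d).
Proof.
rewrite /pph (eq_bigr (fun j : 'I_d => expi ((y j)%:R * (pi * k / 2 ^+ j)))); last first.
  by move=> j _; case: (y j); rewrite ?mul1r ?mul0r ?expi0.
rewrite expi_sum; congr expi.
rewrite /yval natr_sum mulr_sumr mulr_suml; apply: eq_bigr => j _.
rewrite natrM natrX.
have hj := ltn_ord j.
have h : (2 : R) ^+ d = 2 ^+ (d.-1 - j) * 2 * 2 ^+ j.
  by rewrite -exprSr -exprD; congr (_ ^+ _); lia.
rewrite h; field.
by rewrite !expf_neq0 // pnatr_eq0.
Qed.

Lemma sum_pow2_rev (d : nat) :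
  (\sum_(j < d) 2 ^ (d.-1 - j) = \sum_(j < d) 2 ^ j)%N.
Proof.
rewrite (reindex_inj rev_ord_inj) /=; apply: eq_bigr => j _.
have hj := ltn_ord j; f_equal; lia.
Qed.

Lemma sum_pow2 (d : nat) : ((\sum_(j < d) 2 ^ j).+1 = 2 ^ d)%N.
Proof.
elim: d => [|d IH]; first by rewrite big_ord0.
rewrite big_ord_recr /= expnS -addSn IH; lia.
Qed.

Lemma yval_lt (d : nat) (y : bits d) : (yval y < 2 ^ d)%N.
Proof.
rewrite -sum_pow2 ltnS -sum_pow2_rev /yval.
by apply: leq_sum => j _; case: (y j); rewrite ?mul1n ?mul0n.
Qed.

Lemma yval_neg (d : nat) (y : bits d) :
  ((yval [ffun i => ~~ y i] + yval y).+1 = 2 ^ d)%N.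
Proof.
rewrite -sum_pow2 -sum_pow2_rev /yval -big_split /=; congr _.+1.
apply: eq_bigr => j _; rewrite ffunE; case: (y j) => /=; lia.
Qed.

Lemma binexp (d N : nat) : (N < 2 ^ d)%N ->
  (\sum_(j < d) odd (N %/ 2 ^ j) * 2 ^ j)%N = N.
Proof.
elim: d N => [|d IH] N hN.
  by rewrite big_ord0; move: hN; rewrite expn0; case: N.
rewrite big_ord_recl /= expn0 divn1 muln1.
rewrite (eq_bigr (fun j : 'I_d => 2 * (odd ((N %/ 2) %/ 2 ^ j) * 2 ^ j)))%N; last first.
  by move=> j _; rewrite /bump /= add1n expnS divnMA; lia.
rewrite -big_distrr /= IH; last by rewrite ltn_divLR // -expnSr.
rewrite divn2 -[in RHS](odd_double_half N) -muln2; lia.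
Qed.

Lemma absmod_lt (d : nat) (z : int) :
  (`|(z %% (2 ^ d)%:Z)%Z|%N < 2 ^ d)%N /\ ((`|(z %% (2 ^ d)%:Z)%Z|%N)%:Z = (z %% (2 ^ d)%:Z)%Z).
Proof.
have hp : (0 < (2 ^ d)%:Z) by rewrite ltz_nat expn_gt0.
have h1 := ltz_pmod z hp.
have h0 : 0 <= (z %% (2 ^ d)%:Z)%Z by apply: modz_ge0; rewrite gt_eqF.
have he := gez0_abs h0.
split; last by [].
by rewrite -ltz_nat he.
Qed.

Lemma yval_bits_of_int (d : nat) (z : int) :
  yval (bits_of_int d z) = `|(z %% (2 ^ d)%:Z)%Z|%N.
Proof.
have [hlt _] := absmod_lt d z.
rewrite /yval /bits_of_int.
rewrite (eq_bigr (fun j : 'I_d => odd (`|(z %% (2 ^ d)%:Z)%Z|%N %/ 2 ^ (d.-1 - j)) * 2 ^ (d.-1 - j)))%N; last by move=> j _; rewrite ffunE.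
rewrite (reindex_inj rev_ord_inj) /=.
rewrite -[RHS](binexp hlt); apply: eq_bigr => j _.
have hj := ltn_ord j.
have -> : (d.-1 - (d - j.+1) = j)%N by lia.
by [].
Qed.

Lemma bits_of_yval (d : nat) (w : bits d) : bits_of_int d (yval w)%:Z = w.
Proof.
pose g (N : 'I_(2 ^ d)) : bits d := bits_of_int d (val N)%:Z.
have hg : injective g.
  move=> N1 N2 h; apply: val_inj.
  have := congr1 (@yval d) h; rewrite /g !yval_bits_of_int.
  rewrite !modz_small //; apply/andP; split => //; rewrite ltz_nat; exact: ltn_ord.
have hc : (#|{ffun 'I_d -> bool}| <= #|'I_(2 ^ d)|)%N.
by rewrite card_ffun card_bool !card_ord.
have := inj_card_onto hg hc w.
move/codomP => [N ->].
rewrite /g yval_bits_of_int modz_small //.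
apply/andP; split => //; rewrite ltz_nat; exact: ltn_ord.
Qed.

Lemma yval_inj (d : nat) : injective (@yval d).
Proof. by move=> w1 w2 h; rewrite -(bits_of_yval w1) h bits_of_yval. Qed.

Lemma bits_eq (d : nat) (z : int) (w : bits d) :
  (w == bits_of_int d z) = ((2 ^ d)%:Z %| z - (yval w)%:Z)%Z.
Proof.
rewrite -eqz_mod_dvd.
have [_ he] := absmod_lt d z.
rewrite [((yval w)%:Z %% _)%Z]modz_small; last first.
  by apply/andP; split => //; rewrite ltz_nat yval_lt.
apply/eqP/eqP => [->|h].
  by rewrite yval_bits_of_int he.
apply: yval_inj; rewrite yval_bits_of_int.
by apply/eqP; rewrite -eqz_nat he h.
Qed.

Lemma expi_pi_nat (R : realType) (k : nat) : expi (pi * k%:R : R) = (-1) ^+ k.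
Proof.
elim: k => [|k IH]; first by rewrite mulr0 expi0.
rewrite -addn1 natrD mulrDr mulr1 expiD IH exprD expr1.
congr (_ * _); rewrite /expi cospi sinpi. rewrite -[(-1 : R[i])]/(Complex (-1) (-0)). by rewrite oppr0.
Qed.

Lemma expi_pi_int (R : realType) (m : int) : expi (pi * m%:~R : R) = (-1) ^+ `|m|%N.
Proof.
case: m => k.
  by rewrite /= -[(k%:Z)%:~R]/(k%:R) expi_pi_nat.
rewrite NegzE mulrNz mulrN.
have h : expi (- (pi * k.+1%:R)) * expi (pi * k.+1%:R : R) = 1.
  by rewrite -expiD addNr expi0.
rewrite abszN absz_nat.
have h2 : ((-1) ^+ k.+1 : R[i]) * (-1) ^+ k.+1 = 1.
  by rewrite -exprMn mulrNN mulr1 expr1n.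
have e := expi_pi_nat R k.+1.
transitivity (expi (- (pi * k.+1%:R)) * (expi (pi*k.+1%:R : R) * (-1)^+k.+1)).
  by rewrite e h2 mulr1.
by rewrite mulrA h mul1r.
Qed.

Lemma prod_roots (R : realType) (d : nat) (m : int) :
  \prod_(j < d) (1 + expi (pi * m%:~R / 2 ^+ j : R)) =
  if (2 ^ d %| `|m|)%N then 2 ^+ d else 0.
Proof.
elim: d m => [|d IH] m.
  by rewrite big_ord0 expn0 dvd1n expr0.
rewrite big_ord_recl /= expr0 divr1 expi_pi_int.
case h2: (2 %| m)%Z.
  have hm := divzK h2.
  set q := (m %/ 2)%Z in hm.
  rewrite -hm.
  rewrite (eq_bigr (fun j : 'I_d => 1 + expi (pi * q%:~R / 2 ^+ j : R))); last first.
    move=> j _; congr (_ + expi _); rewrite /bump /= add1n intrM exprSr; field.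
    by rewrite expf_neq0 // pnatr_eq0.
  rewrite IH abszM /= -signr_odd oddM andbF expr0 expnSr dvdn_pmul2r //.
  case: (2 ^ d %| `|q|)%N; last by rewrite mulr0.
  by rewrite exprSr mulrC; congr (_ * _).
have hodd : odd `|m|%N.
  by move: h2; rewrite dvdzE /= dvdn2 => /negbT; rewrite negbK.
rewrite -signr_odd hodd expr1 addrN mul0r.
case h: (2 ^ d.+1 %| `|m|)%N => //.
have : (2 %| `|m|)%N by apply: dvdn_trans h; rewrite expnS dvdn_mulr.
by rewrite dvdn2 hodd.
Qed.

Lemma sum_pph (R : realType) (d : nat) (k : R) :
  \sum_(z : bits d) pph k z = \prod_(j < d) (1 + expi (pi * k / 2 ^+ j)).
Proof.
rewrite /pph.
rewrite (eq_bigr (fun j : 'I_d => \sum_(b : bool) (if b then expi (pi * k / 2 ^+ j) else 1))); last first.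
  by move=> j _; rewrite big_bool /= addrC.
by rewrite bigA_distr_bigA.
Qed.

Lemma sym_sum (R : realType) (n : nat) (g : 'I_n -> 'I_n -> R)
  (hg : forall j k, g j k = g k j) :
  \sum_j \sum_k g j k = \sum_j g j j + 2 * \sum_(j : 'I_n) \sum_(k : 'I_n | (j < k)%N) g j k.
Proof.
have e1 : forall j : 'I_n, \sum_k g j k =
   g j j + \sum_(k : 'I_n | (j < k)%N) g j k + \sum_(k : 'I_n | (k < j)%N) g j k.
  move=> j; rewrite (bigD1 j) //= (bigID (fun k : 'I_n => (j < k)%N)) /= addrA.
  congr (_ + _ + _).
    apply: eq_bigl => k; case: (ltngtP j k) => h /=; rewrite ?andbF ?andbT //; apply/eqP => e; by move: h; rewrite e ltnn.
  apply: eq_bigl => k; case: (ltngtP j k) => h /=; rewrite ?andbF ?andbT //.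
    by apply/eqP => e; move: h; rewrite e ltnn.
  by apply/eqP; apply: val_inj.
rewrite (eq_bigr _ (fun j _ => e1 j)) !big_split /=.
have e2 : \sum_(j : 'I_n) \sum_(k : 'I_n | (k < j)%N) g j k = \sum_(j : 'I_n) \sum_(k : 'I_n | (j < k)%N) g j k.
  rewrite (eq_bigr (fun j : 'I_n => \sum_(k : 'I_n) (if (k < j)%N then g j k else 0))); last by move=> j _; rewrite big_mkcond.
  rewrite exchange_big /=; apply: eq_bigr => j _; rewrite [RHS]big_mkcond; apply: eq_bigr => k _.
  by case: ifP; rewrite // hg.
by rewrite e2 -addrA mulr2n mulrDl mul1r.
Qed.

Lemma enum_ord (n : nat) : enum 'I_n = index_enum 'I_n.
Proof. by rewrite enumT /index_enum; unlock. Qed.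

Lemma sum_pairs (R : realType) (n : nat) (h : 'I_n * 'I_n -> R) :
  \sum_(p <- pairs_lt n) h p = \sum_(j : 'I_n) \sum_(k : 'I_n | (j < k)%N) h (j, k).
Proof.
rewrite /pairs_lt big_allpairs_dep /= enum_ord; apply: eq_bigr => j _.
by rewrite big_filter.
Qed.

Lemma mem_pairs (n : nat) (p : 'I_n * 'I_n) : p \in pairs_lt n -> (p.1 < p.2)%N.
Proof.
rewrite /pairs_lt; case/allpairsPdep => j [k [_ hk ->]] /=.
by move: hk; rewrite mem_filter => /andP [].
Qed.

Definition Theta (R : realType) (n d : nat) (Q : 'M[R]_n) (f : bits n -> int)
  (b : basis n d) : R[i] :=
  pph (qempty Q f) b.2 *
  ((\prod_(j <- enum 'I_n) pph (- qj Q j / 2) (sigX j b).2) *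
   (\prod_(p <- pairs_lt n) pph (Q p.1 p.2 / 2) (sigX p.2 (tauC p.1 p.2 b)).2)).

Lemma Utilde_diag (R : realType) (n d : nat) (Q : 'M[R]_n) (f : bits n -> int) :
  @Utilde R n d Q f = diagop (Theta Q f).
Proof.
rewrite /Utilde /Uempty Pd_diag.
rewrite (@compose_diag R n d _ _ (fun j b => pph (- qj Q j / 2) (sigX j b).2)); last first.
  by move=> j _; rewrite Uj_diag.
rewrite (@compose_diag R n d _ _ (fun p b => pph (Q p.1 p.2 / 2) (sigX p.2 (tauC p.1 p.2 b)).2)); last first.
  move=> p hp; apply: Ujk_diag.
  have := mem_pairs hp; case: p {hp} => j k /= hjk.
  by apply/eqP => e; move: hjk; rewrite e ltnn.
rewrite !diag_comp; congr diagop; apply: functional_extensionality => b; by rewrite /Theta mulrA.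
Qed.

Lemma yval_flip (R : realType) (d : nat) (y : bits d) (c : bool) :
  (yval (if c then [ffun i => ~~ y i] else y))%:R =
  (yval y)%:R + (c%:R) * (2 ^+ d - 1 - 2 * (yval y)%:R) :> R.
Proof.
case: c; last by rewrite mul0r addr0.
have h := congr1 (fun m : nat => m%:R : R) (yval_neg y).
rewrite /= -addn1 !natrD natrX in h.
rewrite mul1r -h; ring.
Qed.

Lemma xor_nat (R : realType) (a b : bool) :
  ((a (+) b)%:R : R) = a%:R + b%:R - 2 * a%:R * b%:R.
Proof. by case: a; case: b => /=; ring. Qed.

Lemma Theta_val (R : realType) (n d : nat) (Q : 'M[R]_n) (c : R)
    (f : bits n -> int) (hQsym : Q^T = Q)
    (hf : forall x : bits n,
        (f x)%:~R = c + \sum_(j < n) \sum_(k < n) Q j k * (x j)%:R * (x k)%:R)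
    (x : bits n) (y : bits d) :
  Theta Q f (x, y) =
  expi (2 * pi / 2 ^+ d * (f x)%:~R * (yval y)%:R + alpha R d f x).
Proof.
have hQ : forall j k, Q j k = Q k j.
  by move=> j k; rewrite -{1}hQsym mxE.
rewrite /Theta pphE.
rewrite (eq_bigr (fun j => expi (2 * pi * (- qj Q j / 2) * (yval (sigX j (x, y)).2)%:R / 2 ^+ d))); last by move=> j _; rewrite pphE.
rewrite (eq_bigr (fun p => expi (2 * pi * (Q p.1 p.2 / 2) * (yval (sigX p.2 (tauC p.1 p.2 (x, y))).2)%:R / 2 ^+ d))); last by move=> p _; rewrite pphE.
rewrite !expi_sum -!expiD; congr expi.
rewrite enum_ord sum_pairs /=.
set Y : R := (yval y)%:R.
set M : R := 2 ^+ d - 1 - 2 * Y.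
set S : R := \sum_(j < n) \sum_(k < n) Q j k.
set T : R := \sum_(j < n) Q j j.
set SQX : R := \sum_(j < n) qj Q j * (x j)%:R.
set F0 : R := \sum_(j < n) \sum_(k < n) Q j k * (x j)%:R * (x k)%:R.
set P1 : R := \sum_(j < n) \sum_(k < n | (j < k)%N) Q j k.
set P2 : R := \sum_(j < n) \sum_(k < n | (j < k)%N) Q j k * (x k (+) x j)%:R.
have e1 : \sum_(j < n) 2 * pi * (- qj Q j / 2) * (yval (sigX j (x, y)).2)%:R / 2 ^+ d
    = 2 * pi / 2 ^+ d * (- (Y / 2) * S - (M / 2) * SQX).
  rewrite /S /SQX mulr_sumr mulr_sumr -sumrB mulr_sumr; apply: eq_bigr => j _.
  rewrite /sigX /= yval_flip -/Y -/M /qj; ring.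
have e2 : \sum_(j < n) \sum_(k < n | (j < k)%N) 2 * pi * (Q j k / 2) *
      (yval (sigX k (tauC j k (x, y))).2)%:R / 2 ^+ d
    = 2 * pi / 2 ^+ d * ((Y / 2) * P1 + (M / 2) * P2).
  rewrite /P1 /P2 mulr_sumr mulr_sumr -big_split /= mulr_sumr; apply: eq_bigr => j _.
  rewrite mulr_sumr mulr_sumr -big_split /= mulr_sumr; apply: eq_bigr => k hk.
  rewrite /sigX /tauC /= ffunE eqxx yval_flip -/Y -/M; ring.
rewrite e1 e2.
have hP1 : S = T + 2 * P1 by rewrite /S /T /P1; apply: sym_sum.
have hP2a : \sum_(j < n) \sum_(k < n) Q j k * (x k (+) x j)%:R = 0 + 2 * P2.
  rewrite sym_sum; last by move=> j k; rewrite hQ addbC.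
  by rewrite big1 // => j _; rewrite addbb mulr0.
have hP2b : \sum_(j < n) \sum_(k < n) Q j k * (x k (+) x j)%:R = 2 * SQX - 2 * F0.
  have -> : \sum_(j < n) \sum_(k < n) Q j k * (x k (+) x j)%:R =
      \sum_(j < n) \sum_(k < n) Q j k * (x j)%:R + \sum_(j < n) \sum_(k < n) Q j k * (x k)%:R
      - 2 * F0.
    rewrite /F0 mulr_sumr -!big_split -sumrB; apply: eq_bigr => j _.
    rewrite mulr_sumr -!big_split -sumrB; apply: eq_bigr => k _.
    rewrite xor_nat /=; ring.
  have -> : \sum_(j < n) \sum_(k < n) Q j k * (x j)%:R = SQX.
    by rewrite /SQX; apply: eq_bigr => j _; rewrite /qj mulr_suml.
  have -> : \sum_(j < n) \sum_(k < n) Q j k * (x k)%:R = SQX.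
    rewrite exchange_big /SQX; apply: eq_bigr => k _; rewrite /qj mulr_suml.
    by apply: eq_bigr => j _; rewrite hQ.
  ring.
have hc : (f (bits0 n))%:~R = c.
  rewrite hf big1 ?addr0 // => j _; rewrite big1 // => k _; rewrite !ffunE. by rewrite !mulr0.
have hq : qempty Q f = c + T / 4 + S / 4.
  by rewrite /qempty hc /T /S /mxtrace.
rewrite /alpha hf -/F0 hc hq.
have -> : P1 = (S - T) / 2 by rewrite hP1; field.
have -> : P2 = SQX - F0.
  have := hP2a; rewrite hP2b => h.
  have h2 : (2:R) != 0 by rewrite pnatr_eq0.
  apply: (mulfI h2); by rewrite mulrBr h add0r.
rewrite /M; field.
by rewrite expf_neq0 // pnatr_eq0.
Qed.
Lemma op_ket (R : realType) (n d : nat) (K : basis n d -> basis n d -> R[i])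
  (x : bits n) (y : bits d) :
  op_of_kernel K (ket R x y) = fun b' => K b' (x, y).
Proof.
apply: functional_extensionality => b'.
rewrite /op_of_kernel (bigD1 (x, y)) //= /ket eqxx mulr1 big1 ?addr0 //.
by move=> b /negbTE ->; rewrite mulr0.
Qed.

Lemma conjcM' (R : realType) (a b : R[i]) : conjc (a * b) = conjc a * conjc b.
Proof. exact: rmorphM. Qed.

Lemma Uenc_val (R : realType) (n d : nat) (Q : 'M[R]_n) (c : R)
    (f : bits n -> int) (hQsym : Q^T = Q)
    (hf : forall x : bits n,
        (f x)%:~R = c + \sum_(j < n) \sum_(k < n) Q j k * (x j)%:R * (x k)%:R)
    (x : bits n) (y : bits d) :
  @Uencoder R n d Q f (ket R x y) =
      sscale (expi (alpha R d f x))
             (ket R x (bits_of_int d ((yval y)%:Z + f x))).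
Proof.
rewrite /Uencoder /= /QFT op_ket Utilde_diag.
apply: functional_extensionality => -[x2 w].
rewrite /QFTdag /op_of_kernel /diagop /adjoint_kernel /sscale /ket.
transitivity (\sum_(a : bits n) \sum_(z : bits d) conjc (QFT_kernel R (a, z) (x2, w)) * (Theta Q f (a, z) * QFT_kernel R (a, z) (x, y))).
  by rewrite pair_bigA.
rewrite (bigD1 x) //= [X in _ + X]big1 ?addr0; last first.
  move=> a hax; rewrite big1 // => z _.
  by rewrite /QFT_kernel /= (negbTE hax) !mulr0.
set s := (Num.sqrt (2 ^+ d : R))^-1.
have [->|hx] := eqVneq x2 x; last first.
  rewrite big1; last first.
    by move=> z _; rewrite /QFT_kernel /= eq_sym (negbTE hx) conjc0 mul0r.
  by rewrite xpair_eqE (negbTE hx) /= mulr0.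
pose m : int := ((yval y)%:Z + f x - (yval w)%:Z).
have hm : (m%:~R : R) = (yval y)%:R + (f x)%:~R - (yval w)%:R.
  by rewrite /m intrB intrD.
have E : forall z : bits d,
    (QFT_kernel R (x, z) (x, w))^*%C * (Theta Q f (x, z) * QFT_kernel R (x, z) (x, y))
    = (s%:C * s%:C) * expi (alpha R d f x) * pph (m%:~R) z.
  move=> z; rewrite /QFT_kernel /= eqxx -/s (Theta_val hQsym hf) pphE.
  rewrite conjcM' conj_expi conjc_real.
  set a := 2 * pi * _ * _ / _.
  set b := 2 * pi / _ * _ * _ + _.
  set c' := 2 * pi * _ * _ / _.
  transitivity ((s%:C * s%:C) * (expi (- a) * expi b * expi c')); first by ring.
  rewrite -(expiD (- a) b) -(expiD (- a + b) c') -[RHS]mulrA -(expiD (alpha R d f x)); congr (_ * expi _).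
  rewrite /a /b /c' hm; ring.
rewrite (eq_bigr _ (fun z _ => E z)) -mulr_sumr sum_pph prod_roots.
have hs : s * s * 2 ^+ d = 1 :> R.
  rewrite /s -expr2 exprVn sqr_sqrtr ?mulVf //.
    by rewrite expf_neq0 // pnatr_eq0.
  by rewrite exprn_ge0.
have hsC : (s%:C * s%:C * 2 ^+ d : R[i]) = 1.
  have h2 : ((2 ^+ d : R)%:C : R[i]) = 2 ^+ d by rewrite rmorphXn rmorph_nat.
  by rewrite -h2 -!rmorphM hs.
rewrite xpair_eqE eqxx /= bits_eq dvdzE /=.
rewrite -/m.
case: (2 ^ d %| `|m|)%N.
  by rewrite mulrAC hsC mul1r mulr1.
by rewrite !mulr0.
Qed.

Theorem mainTheorem1 (R : realType) (n d : nat) (Q : 'M[R]_n) (c : R)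
    (f : bits n -> int)
    (hn : (0 < n)%N) (hd : (0 < d)%N)
    (hQsym : Q^T = Q)
    (hrange : forall x : bits n,
        - (2 ^ d.-1)%:Z <= f x /\ f x < (2 ^ d.-1)%:Z)
    (hf : forall x : bits n,
        (f x)%:~R = c + \sum_(j < n) \sum_(k < n) Q j k * (x j)%:R * (x k)%:R) :
  (forall (x : bits n) (y : bits d),
      @Utilde R n d Q f (ket R x y) =
      sscale (expi (2 * pi / 2 ^+ d * (f x)%:~R * (yval y)%:R + alpha R d f x))
             (ket R x y)) /\
  (forall (x : bits n) (y : bits d),
      @Uencoder R n d Q f (ket R x y) =
      sscale (expi (alpha R d f x))
             (ket R x (bits_of_int d ((yval y)%:Z + f x)))) /\
  is_PQDE f (@Uencoder R n d Q f).
Proof.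
have P2 := Uenc_val hQsym hf.
split; last split => //.
  move=> x y; rewrite Utilde_diag.
  apply: functional_extensionality => b.
  rewrite /diagop /sscale /ket.
  case: eqP => [->|_]; last by rewrite !mulr0.
  by rewrite (Theta_val hQsym hf).
by exists (fun x _ => alpha R d f x).
Qed.
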